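(* Let $p\ge 1$ be an integer. (i) For all $x\in[0,1]^p, y\in\{0,1\}^p$, and for all $x\in\{0,1\}^p, y\in[0,1]^p$, one has $\overline{\Delta}_{\mathrm{JML1}}(x,y)=\overline{\Delta}_{\mathrm{JML2}}(x,y)=\overline{\Delta}_{\mathrm{SJL},L^1}(x,y)$. (ii) For all $x,y\in[0,1]^p$, $\overline{\Delta}_{\mathrm{JML1},L^2}(x,y)=\overline{\Delta}_{\mathrm{JML2},L^2}(x,y)=\overline{\Delta}_{\mathrm{SJL},L^2}(x,y)$. (iii) There exist $x,y\in[0,1]^p$ with $\overline{\Delta}_{\mathrm{JML1}}(x,y)\neq\overline{\Delta}_{\mathrm{JML2}}(x,y)$ and $\overline{\Delta}_{\mathrm{JML2}}(x,y)\neq\overline{\Delta}_{\mathrm{SJL},L^1}(x,y)$.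
   Context: For $x,y \in [0,1]^p$ write $\|x\|_1=\sum_{i=1}^p |x_i|$, $\|x\|_2^2=\sum_{i=1}^p x_i^2$ and $\langle x,y\rangle=\sum_{i=1}^p x_iy_i$. Define, for $x,y\in[0,1]^p$: $\overline{\Delta}_{\mathrm{JML1}}(x,y) = 1 - \frac{\|x\|_1+\|y\|_1-\|x-y\|_1}{\|x\|_1+\|y\|_1+\|x-y\|_1}$, $\overline{\Delta}_{\mathrm{JML2}}(x,y) = 1 - \frac{\langle x,y\rangle}{\langle x,y\rangle+\|x-y\|_1}$, $\overline{\Delta}_{\mathrm{SJL},L^1}(x,y) = 1 - \frac{\langle x,y\rangle}{\|x\|_1+\|y\|_1-\langle x,y\rangle}$, $\overline{\Delta}_{\mathrm{JML1},L^2}(x,y) = 1 - \frac{\|x\|_2^2+\|y\|_2^2-\|x-y\|_2^2}{\|x\|_2^2+\|y\|_2^2+\|x-y\|_2^2}$, $\overline{\Delta}_{\mathrm{JML2},L^2}(x,y) = 1 - \frac{\langle x,y\rangle}{\langle x,y\rangle+\|x-y\|_2^2}$, $\overline{\Delta}_{\mathrm{SJL},L^2}(x,y) = 1 - \frac{\langle x,y\rangle}{\|x\|_2^2+\|y\|_2^2-\langle x,y\rangle}$. All these denominators vanish only when $x=y=0$; by convention each of these functions takes the value $0$ at $(x,y)=(0,0)$. *)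

(* Defs.v *)
From mathcomp Require Import all_boot all_order all_algebra.
Set Implicit Arguments. Unset Strict Implicit. Unset Printing Implicit Defensive.
Import Order.TTheory GRing.Theory Num.Theory.
Local Open Scope ring_scope.

Section Defs.
Variables (R : realFieldType) (p : nat).
Implicit Types x y : 'I_p -> R.

Definition norm1 x : R := \sum_(i < p) `|x i|.
Definition norm2sq x : R := \sum_(i < p) x i ^+ 2.
Definition inner x y : R := \sum_(i < p) x i * y i.
Definition vsub x y : 'I_p -> R := fun i => x i - y i.

Definition both_zero x y : bool := [forall i, (x i == 0) && (y i == 0)].

Definition in_unit_cube x : Prop := forall i, 0 <= x i <= 1.
Definition is_binary x : Prop := forall i, (x i == 0) || (x i == 1).

Definition D_JML1 x y : R :=
  if both_zero x y then 0 else
  1 - (norm1 x + norm1 y - norm1 (vsub x y)) / (norm1 x + norm1 y + norm1 (vsub x y)).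
Definition D_JML2 x y : R :=
  if both_zero x y then 0 else
  1 - inner x y / (inner x y + norm1 (vsub x y)).
Definition D_SJL_L1 x y : R :=
  if both_zero x y then 0 else
  1 - inner x y / (norm1 x + norm1 y - inner x y).
Definition D_JML1_L2 x y : R :=
  if both_zero x y then 0 else
  1 - (norm2sq x + norm2sq y - norm2sq (vsub x y)) / (norm2sq x + norm2sq y + norm2sq (vsub x y)).
Definition D_JML2_L2 x y : R :=
  if both_zero x y then 0 else
  1 - inner x y / (inner x y + norm2sq (vsub x y)).
Definition D_SJL_L2 x y : R :=
  if both_zero x y then 0 else
  1 - inner x y / (norm2sq x + norm2sq y - inner x y).
End Defs.

(* Main.v *)
Require Import Defs.
From mathcomp Require Import all_boot all_order all_algebra.
From mathcomp Require Import ring lra.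
Import Order.TTheory GRing.Theory Num.Theory.
Local Open Scope ring_scope.

Lemma key (R : realFieldType) (a b c : R) :
  1 - (a+b-(a+b-2*c))/(a+b+(a+b-2*c)) = 1 - c/(c+(a+b-2*c)) /\
  1 - c/(c+(a+b-2*c)) = 1 - c/(a+b-c).
Proof.
have e1 : a+b-(a+b-2*c) = 2*c by ring.
have e2 : a+b+(a+b-2*c) = 2*(a+b-c) by ring.
have e3 : c+(a+b-2*c) = a+b-c by ring.
rewrite e1 e2 e3 -mulf_div divff ?mul1r //.
by rewrite pnatr_eq0.
Qed.

Lemma coord (R : realFieldType) (x y : R) :
  ((0 <= x <= 1) /\ ((y == 0) || (y == 1))) \/ (((x == 0) || (x == 1)) /\ (0 <= y <= 1)) ->
  `|x - y| = `|x| + `|y| - 2 * (x * y).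
Proof.
case=> [[/andP[h0 h1] /orP[/eqP->|/eqP->]]|[/orP[/eqP->|/eqP->] /andP[h0 h1]]].
- rewrite subr0 normr0 ger0_norm //; ring.
- rewrite ler0_norm ?subr_le0 // (ger0_norm h0) normr1; ring.
- rewrite sub0r normrN normr0 ger0_norm //; ring.
- rewrite ger0_norm ?subr_ge0 // (ger0_norm h0) normr1; ring.
Qed.

Lemma sum_const_mul (R : realFieldType) (p : nat) (z : R) :
  \sum_(i < p) z = p%:R * z.
Proof. by rewrite sumr_const card_ord mulr_natl. Qed.

Theorem theorem2 (R : realFieldType) (p : nat) (hp : (1 <= p)%N) :
  (* (i) *)
  (forall x y : 'I_p -> R,
     ((in_unit_cube x /\ is_binary y) \/ (is_binary x /\ in_unit_cube y)) ->
     D_JML1 x y = D_JML2 x y /\ D_JML2 x y = D_SJL_L1 x y) /\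
  (* (ii) *)
  (forall x y : 'I_p -> R, in_unit_cube x -> in_unit_cube y ->
     D_JML1_L2 x y = D_JML2_L2 x y /\ D_JML2_L2 x y = D_SJL_L2 x y) /\
  (* (iii) *)
  (exists x y : 'I_p -> R, in_unit_cube x /\ in_unit_cube y /\
     D_JML1 x y <> D_JML2 x y /\ D_JML2 x y <> D_SJL_L1 x y).
Proof.
split; [|split].
- move=> x y H.
  rewrite /D_JML1 /D_JML2 /D_SJL_L1.
  have -> : norm1 (vsub x y) = norm1 x + norm1 y - 2 * inner x y.
    rewrite /norm1 /inner mulr_sumr -big_split /= -sumrB.
    apply: eq_bigr => i _; rewrite /vsub; apply: coord.
    by case: H => [[Hx Hy]|[Hx Hy]]; [left|right]; split.
  case: ifP => _ //.
  exact: key.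
- move=> x y _ _.
  rewrite /D_JML1_L2 /D_JML2_L2 /D_SJL_L2.
  have -> : norm2sq (vsub x y) = norm2sq x + norm2sq y - 2 * inner x y.
    rewrite /norm2sq /inner mulr_sumr -big_split /= -sumrB.
    by apply: eq_bigr => i _; rewrite /vsub; ring.
  case: ifP => _ //.
  exact: key.
- exists (fun _ => 1/2), (fun _ => 1/4).
  have hb : both_zero (fun _ : 'I_p => 1/2 : R) (fun _ => 1/4) = false.
    apply/negbTE/negP => /forallP /(_ (Ordinal hp)) /andP[/eqP h _].
    by move: h; lra.
  have hp0 : (p%:R : R) != 0 by rewrite pnatr_eq0 -lt0n.
  rewrite /D_JML1 /D_JML2 /D_SJL_L1 hb /norm1 /inner /vsub.
  rewrite /= !sum_const_mul.
  have h1 : `|1/2 : R| = 1/2 by rewrite ger0_norm //; lra.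
  have h2 : `|1/4 : R| = 1/4 by rewrite ger0_norm //; lra.
  have h3 : `|1/2 - 1/4 : R| = 1/4 by rewrite ger0_norm; lra.
  rewrite h1 h2 h3.
  have hp1 : (0 : R) < p%:R by rewrite ltr0n.
  move: (p%:R : R) hp1 => P hP.
  split; [by move=> i; lra|split; [by move=> i; lra|]].
  split; move/eqP; rewrite -subr_eq0; apply/negP.
  + have -> : (1 - (P * (1 / 2) + P * (1 / 4) - P * (1 / 4)) /
   (P * (1 / 2) + P * (1 / 4) + P * (1 / 4)) -
   (1 - P * (1 / 2 * (1 / 4)) / (P * (1 / 2 * (1 / 4)) + P * (1 / 4))) : R) = - (1/6).
      by field; apply/andP; split; rewrite gt_eqF //; lra.
    by rewrite oppr_eq0; lra.
  + have -> : (1 - P * (1 / 2 * (1 / 4)) / (P * (1 / 2 * (1 / 4)) + P * (1 / 4)) -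
   (1 - P * (1 / 2 * (1 / 4)) / (P * (1 / 2) + P * (1 / 4) - P * (1 / 2 * (1 / 4)))) : R) = - (2/15).
      by field; apply/andP; split; rewrite gt_eqF //; lra.
    by rewrite oppr_eq0; lra.
Qed.
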